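(* Let $\mathcal{N}$ be one of $\mathcal{M}_\times$, $\mathcal{M}_\Sigma$, $\mathcal{M}$. If $\mathcal{N}\perp\Sigma$ and $\mathcal{N}\perp\mathsf{L}E$, then $\mathcal{N}\perp E$.
   Context: $\mathcal{E}$ is a locally cartesian closed category with a dominance: a class of monos (the $\Sigma$-monos) closed under pullback, identities and composition, classified by $\top:1\to\Sigma$. $\mathsf{L}E=\sum_{\phi:\Sigma}E^\phi$ is the associated partial map classifier. For a mono $m:I\to J$, $m\perp E$ means every map $I\to E$ extends uniquely along $m$; $\mathcal{N}\perp E$ means $m\perp E$ for all $m\in\mathcal{N}$. Given a class $\mathcal{M}$ of monos, $\mathcal{M}_\times$ is the smallest class of monos containing $\mathcal{M}$ and stable under products (with arbitrary objects), and $\mathcal{M}_\Sigma$ is the smallest class of monos containing $\mathcal{M}_\times$ and stable under pullback along $\Sigma$-monos. *)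

(* Defs.v *)
Set Implicit Arguments.
Unset Strict Implicit.

Record Cat := {
  Ob :> Type;
  Hom : Ob -> Ob -> Type;
  idm : forall A, Hom A A;
  comp : forall A B D, Hom B D -> Hom A B -> Hom A D;
  comp_id_l : forall A B (f : Hom A B), comp (idm B) f = f;
  comp_id_r : forall A B (f : Hom A B), comp f (idm A) = f;
  comp_assoc : forall A B D E (f : Hom A B) (g : Hom B D) (h : Hom D E),
      comp h (comp g f) = comp (comp h g) f
}.
Arguments Hom {c} _ _.
Arguments idm {c} _.
Arguments comp {c A B D} _ _.

Declare Scope cat_scope.
Notation "g ∘ f" := (comp g f) (at level 40, left associativity) : cat_scope.
Open Scope cat_scope.

Definition Mono {C : Cat} {A B : C} (m : Hom A B) : Prop :=
  forall X (f g : Hom X A), m ∘ f = m ∘ g -> f = g.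

Definition IsPullback {C : Cat} {A B D P : C} (f : Hom A D) (g : Hom B D)
    (p1 : Hom P A) (p2 : Hom P B) : Prop :=
  f ∘ p1 = g ∘ p2 /\
  forall X (x1 : Hom X A) (x2 : Hom X B), f ∘ x1 = g ∘ x2 ->
    exists h : Hom X P, p1 ∘ h = x1 /\ p2 ∘ h = x2 /\
      forall h' : Hom X P, p1 ∘ h' = x1 -> p2 ∘ h' = x2 -> h' = h.

(* Locally cartesian closed structure: terminal object, chosen pullbacks, and
   dependent products Pi_f (right adjoints to pullback f^* ) along every f. *)
Record LCCC (C : Cat) := {
  one : C;
  bang : forall X : C, Hom X one;
  bang_unique : forall X (f : Hom X one), f = bang X;
  pbOb : forall (A B D : C) (f : Hom A D) (g : Hom B D), C;
  pb1 : forall A B D (f : Hom A D) (g : Hom B D), Hom (pbOb f g) A;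
  pb2 : forall A B D (f : Hom A D) (g : Hom B D), Hom (pbOb f g) B;
  pb_isPB : forall A B D (f : Hom A D) (g : Hom B D),
      IsPullback f g (pb1 f g) (pb2 f g);
  PiOb : forall (A B : C) (f : Hom A B) (X : C) (p : Hom X A), C;
  Pi_pr : forall A B (f : Hom A B) X (p : Hom X A), Hom (PiOb f p) B;
  Pi_ev : forall A B (f : Hom A B) X (p : Hom X A),
      Hom (pbOb (Pi_pr f p) f) X;
  Pi_ev_over : forall A B (f : Hom A B) X (p : Hom X A),
      p ∘ Pi_ev f p = pb2 (Pi_pr f p) f;
  Pi_univ : forall A B (f : Hom A B) X (p : Hom X A)
      (Y : C) (q : Hom Y B) (h : Hom (pbOb q f) X),
      p ∘ h = pb2 q f ->
      exists h' : Hom Y (PiOb f p),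
        Pi_pr f p ∘ h' = q /\
        (forall k : Hom (pbOb q f) (pbOb (Pi_pr f p) f),
            pb1 (Pi_pr f p) f ∘ k = h' ∘ pb1 q f ->
            pb2 (Pi_pr f p) f ∘ k = pb2 q f ->
            Pi_ev f p ∘ k = h) /\
        (forall h'' : Hom Y (PiOb f p),
            Pi_pr f p ∘ h'' = q ->
            (forall k : Hom (pbOb q f) (pbOb (Pi_pr f p) f),
                pb1 (Pi_pr f p) f ∘ k = h'' ∘ pb1 q f ->
                pb2 (Pi_pr f p) f ∘ k = pb2 q f ->
                Pi_ev f p ∘ k = h) ->
            h'' = h')
}.
Arguments one {C} _.
Arguments bang {C} _ _.

Definition MorClass (C : Cat) := forall A B : C, Hom A B -> Prop.

Record Dominance (C : Cat) (L : LCCC C) := {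
  Sig : C;
  top : Hom (one L) Sig;
  SigMono : MorClass C;
  SigMono_mono : forall A B (m : Hom A B), SigMono m -> Mono m;
  SigMono_pb : forall A B D P (m : Hom A D) (g : Hom B D)
      (p1 : Hom P A) (p2 : Hom P B),
      SigMono m -> IsPullback m g p1 p2 -> SigMono p2;
  SigMono_id : forall A : C, SigMono (idm A);
  SigMono_comp : forall A B D (m : Hom A B) (n : Hom B D),
      SigMono m -> SigMono n -> SigMono (n ∘ m);
  SigMono_classified : forall I J (m : Hom I J),
      SigMono m <-> exists chi : Hom J Sig, IsPullback top chi (bang L I) m;
  SigMono_chi_unique : forall I J (m : Hom I J) (chi chi' : Hom J Sig),
      IsPullback top chi (bang L I) m -> IsPullback top chi' (bang L I) m ->
      chi = chi'
}.
Arguments Sig {C L} _.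
Arguments top {C L} _.
Arguments SigMono {C L} _ _ _ _.

(* Partial map classifier L E = sum_{phi : Sigma} E^phi = Sigma_! Pi_top (E) *)
Definition LObj {C : Cat} {L : LCCC C} (Dm : Dominance L) (E : C) : C :=
  PiOb L (top Dm) (bang L E).

Definition Orth {C : Cat} {I J : C} (m : Hom I J) (E : C) : Prop :=
  forall f : Hom I E, exists g : Hom J E, g ∘ m = f /\
    forall g' : Hom J E, g' ∘ m = f -> g' = g.

Definition ClassOrth {C : Cat} (N : MorClass C) (E : C) : Prop :=
  forall I J (m : Hom I J), N I J m -> Orth m E.

(* M_times : smallest class containing M, stable under products m × X
   (products are pullbacks over the terminal object). *)
Inductive Mtimes {C : Cat} (L : LCCC C) (M : MorClass C) : MorClass C :=
| mt_base : forall I J (m : Hom I J), M I J m -> @Mtimes C L M I J m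
| mt_prod : forall I J (m : Hom I J), @Mtimes C L M I J m ->
    forall (X P Q : C) (a1 : Hom P I) (a2 : Hom P X)
      (b1 : Hom Q J) (b2 : Hom Q X) (k : Hom P Q),
      IsPullback (bang L I) (bang L X) a1 a2 ->
      IsPullback (bang L J) (bang L X) b1 b2 ->
      b1 ∘ k = m ∘ a1 -> b2 ∘ k = a2 ->
      @Mtimes C L M P Q k.

Inductive MSigma {C : Cat} {L : LCCC C} (Dm : Dominance L) (M : MorClass C)
  : MorClass C :=
| ms_base : forall I J (m : Hom I J), @Mtimes C L M I J m -> @MSigma C L Dm M I J m
| ms_pb : forall I J (m : Hom I J), @MSigma C L Dm M I J m ->
    forall (K P : C) (s : Hom K J) (p1 : Hom P I) (p2 : Hom P K),
      SigMono Dm K J s -> IsPullback m s p1 p2 ->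
      @MSigma C L Dm M P K p2.

Inductive WhichClass := W_M | W_times | W_Sigma.

Definition chosenClass {C : Cat} {L : LCCC C} (Dm : Dominance L)
    (M : MorClass C) (w : WhichClass) : MorClass C :=
  match w with
  | W_M => M
  | W_times => Mtimes L M
  | W_Sigma => MSigma Dm M
  end.

(* Main.v *)
Require Import Defs.

Section Aux.
Variables (C : Cat) (L : LCCC C) (Dm : Dominance L) (E : C).

Let T := top Dm.
Let bE := bang L E.
Let LE := LObj Dm E.
Let pr : Hom LE (Sig Dm) := Pi_pr L T bE.
Let PB := pbOb L pr T.
Let ev : Hom PB E := Pi_ev L T bE.

Lemma one_eq (X : C) (a b : Hom X (one L)) : a = b.
Proof. rewrite (bang_unique a), (bang_unique b). reflexivity. Qed.

Lemma eta_ex : exists eta : Hom E LE, pr ∘ eta = T ∘ bE /\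
  forall (Y : C) (x : Hom Y E) (k : Hom Y PB),
    pb1 L pr T ∘ k = eta ∘ x -> ev ∘ k = x.
Proof.
  set (q := T ∘ bE).
  assert (Hh : bE ∘ pb1 L q T = pb2 L q T) by apply one_eq.
  destruct (Pi_univ Hh) as [eta [Hpr [Hev _]]].
  exists eta. split; [exact Hpr|].
  intros Y x k Hk.
  destruct (pb_isPB L q T) as [Hq _].
  destruct (pb_isPB L pr T) as [_ HU].
  assert (Hc : pr ∘ (eta ∘ pb1 L q T) = T ∘ pb2 L q T).
  { rewrite comp_assoc. fold pr in Hpr. rewrite Hpr. exact Hq. }
  destruct (HU _ _ _ Hc) as [k0 [Hk01 [Hk02 _]]].
  assert (Hev0 : ev ∘ k0 = pb1 L q T) by (apply Hev; assumption).
  assert (Hj : q ∘ x = T ∘ bang L Y).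
  { unfold q. rewrite <- comp_assoc. f_equal. apply one_eq. }
  destruct (proj2 (pb_isPB L q T) _ _ _ Hj) as [j [Hj1 [Hj2 _]]].
  assert (Hkx : pr ∘ (eta ∘ x) = T ∘ bang L Y).
  { rewrite comp_assoc. fold pr in Hpr. rewrite Hpr. exact Hj. }
  destruct (HU _ _ _ Hkx) as [u [_ [_ Hu]]].
  assert (E1 : k = u) by (apply Hu; [exact Hk | apply one_eq]).
  assert (E2 : k0 ∘ j = u).
  { apply Hu; [ | apply one_eq].
    rewrite comp_assoc, Hk01, <- comp_assoc, Hj1. reflexivity. }
  rewrite E1, <- E2. rewrite comp_assoc. rewrite <- Hj1, <- Hev0. reflexivity.
Qed.

Lemma orth_main (I J : C) (m : Hom I J) :
  Orth m (Sig Dm) -> Orth m LE -> Orth m E.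
Proof.
  intros HS HL f.
  destruct eta_ex as [eta [Hpr Hkey]].
  destruct (HL (eta ∘ f)) as [g [Hg Hgu]].
  destruct (HS (T ∘ bang L I)) as [c [_ Hcu]].
  assert (Hpg : pr ∘ g = T ∘ bang L J).
  { rewrite (Hcu (pr ∘ g)), (Hcu (T ∘ bang L J)); [reflexivity| |].
    - rewrite <- comp_assoc. f_equal. apply one_eq.
    - rewrite <- comp_assoc, Hg, comp_assoc, Hpr, <- comp_assoc. f_equal. apply one_eq. }
  destruct (proj2 (pb_isPB L pr T) _ _ _ Hpg) as [k [Hk1 [Hk2 _]]].
  exists (ev ∘ k). split.
  - rewrite <- comp_assoc. apply Hkey. transitivity (g ∘ m); [rewrite <- Hk1; apply comp_assoc | exact Hg].
  - intros g' Hg'.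
    assert (Heg : eta ∘ g' = g).
    { apply Hgu. rewrite <- comp_assoc, Hg'. reflexivity. }
    symmetry. apply Hkey. rewrite Hk1. symmetry. exact Heg.
Qed.
End Aux.

Theorem mainTheorem12 (C : Cat) (L : LCCC C) (Dm : Dominance L)
    (M : MorClass C) (HM : forall I J (m : Hom I J), M I J m -> Mono m)
    (w : WhichClass) (E : C) :
  ClassOrth (chosenClass Dm M w) (Sig Dm) ->
  ClassOrth (chosenClass Dm M w) (LObj Dm E) ->
  ClassOrth (chosenClass Dm M w) E.
Proof.
  intros HS HL I J m Hm.
  apply (@orth_main C L Dm E I J m); [apply HS | apply HL]; exact Hm.
Qed.
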